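(* Every kite-free chordal graph is hereditarily connected-domishold.
   Context: The kite (co-fork) is the $5$-vertex graph obtained from a diamond ($K_4$ minus an edge) by adding a new vertex adjacent to exactly one of the two degree-$2$ vertices of the diamond. A graph is chordal if it has no induced cycle of length at least $4$. A connected dominating set of a connected graph $G$ is a set $S\subseteq V(G)$ such that every vertex outside $S$ has a neighbor in $S$ and $G[S]$ is connected; $G$ is connected-domishold if there exist $w:V(G)\to\mathbb{R}_{\ge0}$, $t\in\mathbb{R}_{\ge0}$ such that for all $S\subseteq V(G)$, $\sum_{x\in S}w(x)\ge t$ iff $S$ is a connected dominating set, disconnected graphs being connected-domishold by convention. $G$ is hereditarily connected-domishold if every induced subgraph of $G$ is connected-domishold. *)

(* Defs.v *)
From mathcomp Require Import all_boot.
From Stdlib Require Import Reals.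
Set Implicit Arguments. Unset Strict Implicit. Unset Printing Implicit Defensive.

Definition simple_graph (T : finType) (e : rel T) : Prop :=
  symmetric e /\ irreflexive e.

Definition induced_rel (T : finType) (e : rel T) (A : {set T}) : rel T :=
  fun x y => [&& x \in A, y \in A & e x y].

(* G[A] is connected: nonempty and any two vertices joined by a path in G[A].
   (The null graph is regarded as not connected.) *)
Definition connected_in (T : finType) (e : rel T) (A : {set T}) : Prop :=
  A != set0 /\ forall x y, x \in A -> y \in A -> connect (induced_rel e A) x y.

Definition is_cds (T : finType) (e : rel T) (A S : {set T}) : Prop :=
  S \subset A /\
  (forall x, x \in A -> x \notin S -> exists2 y, y \in S & e x y) /\
  connected_in e S.

(* G[A] is connected-domishold (disconnected graphs are by convention). *)
Definition connected_domishold (T : finType) (e : rel T) (A : {set T}) : Prop :=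
  ~ connected_in e A \/
  exists (w : T -> R) (t : R),
    (forall x, x \in A -> Rle 0 (w x)) /\ Rle 0 t /\
    forall S : {set T}, S \subset A ->
      (Rle t (\big[Rplus/0%R]_(x in S) w x) <-> is_cds e A S).

Definition hereditarily_connected_domishold (T : finType) (e : rel T) : Prop :=
  forall A : {set T}, connected_domishold e A.

Definition induced_copy (n : nat) (h : rel 'I_n) (T : finType) (e : rel T)
  (f : 'I_n -> T) : Prop :=
  injective f /\ forall i j : 'I_n, i != j -> e (f i) (f j) = h i j.

(* Kite: diamond on 0,1,2,3 with 1,2 the degree-3 vertices and 0,3 the
   degree-2 vertices; vertex 4 adjacent only to 0. *)
Definition kite_edge (i j : nat) : bool :=
  [|| (i == 0) && (j == 1), (i == 0) && (j == 2), (i == 1) && (j == 2),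
      (i == 1) && (j == 3), (i == 2) && (j == 3) | (i == 0) && (j == 4)].
Definition kite_rel : rel 'I_5 :=
  fun i j => kite_edge i j || kite_edge j i.

Definition kite_free (T : finType) (e : rel T) : Prop :=
  forall f : 'I_5 -> T, ~ induced_copy kite_rel e f.

Definition cycle_rel (k : nat) : rel 'I_k :=
  fun i j => (j == i.+1 %% k :> nat) || (i == j.+1 %% k :> nat).

Definition chordal (T : finType) (e : rel T) : Prop :=
  forall k : nat, 4 <= k -> forall f : 'I_k -> T, ~ induced_copy (@cycle_rel k) e f.

(* Main.v *)
Require Import Defs.
From mathcomp Require Import all_boot zify.
From Stdlib Require Import Reals Classical.
Set Implicit Arguments. Unset Strict Implicit. Unset Printing Implicit Defensive.

Definition ipath (T : finType) (e : rel T) (g : nat -> T) (k : nat) :=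
  (forall i j, i <= k -> j <= k -> g i = g j -> i = j) /\
  (forall i j, i < j -> j <= k -> e (g i) (g j) = (j == i.+1)).

Lemma modS_small (i n : nat) : i < n -> i.+1 %% n = if i.+1 == n then 0 else i.+1.
Proof.
move=> lt; case: eqP => [->|ne]; first by rewrite modnn.
by rewrite modn_small //; lia.
Qed.

Lemma hole (T : finType) (e : rel T) : symmetric e -> chordal e ->
  forall g k v, ipath e g k -> 2 <= k ->
  (forall i, i <= k -> v != g i) ->
  (forall i, i <= k -> e v (g i) = (i == 0) || (i == k)) -> False.
Proof.
move=> esym ch g k v [ginj gadj] k2 vne vadj.
pose f := fun i : 'I_k.+2 => if val i == 0 then v else g (val i).-1.
apply: (ch k.+2 ltac:(lia) f); split.
  move=> [i Hi] [j Hj]; rewrite /f /= => H; apply: val_inj => /=.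
  move: H; case: eqP => i0; case: eqP => j0; try lia.
  - move=> H; have := vne j.-1 ltac:(lia); by rewrite H eqxx.
  - move=> H; have := vne i.-1 ltac:(lia); by rewrite -H eqxx.
  - by move/ginj => H; lia.
have key : forall i j : 'I_k.+2, (i < j)%N ->
    e (f i) (f j) = cycle_rel i j.
  move=> [i Hi] [j Hj] /= ij; rewrite /f /cycle_rel /=.
  rewrite !modS_small //.
  case: eqP => i0.
    subst i; case: eqP => j0; first lia.
    rewrite vadj; last lia.
    by repeat case: ifP => ?; repeat case: eqP => ? //=; try lia.
  case: eqP => j0; first lia.
  rewrite gadj; try lia.
  by repeat case: ifP => ?; repeat case: eqP => ? //=; try lia.
move=> i j ne; case: (ltngtP i j) => ij; first exact: key.
  rewrite esym key // /cycle_rel orbC //.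
by move/val_inj: ij => ij; rewrite ij eqxx in ne.
Qed.

Lemma kite_contra (T : finType) (e : rel T) : symmetric e -> kite_free e ->
  forall x0 x1 x2 x3 x4 : T,
  uniq [:: x0; x1; x2; x3; x4] ->
  e x0 x1 -> e x0 x2 -> e x1 x2 -> e x1 x3 -> e x2 x3 -> e x0 x4 ->
  ~~ e x0 x3 -> ~~ e x1 x4 -> ~~ e x2 x4 -> ~~ e x3 x4 -> False.
Proof.
move=> esym kf x0 x1 x2 x3 x4 U e01 e02 e12 e13 e23 e04 n03 n14 n24 n34.
apply: (kf (fun i : 'I_5 => nth x0 [:: x0; x1; x2; x3; x4] i)); split.
  move=> i j /eqP H; apply: val_inj; apply/eqP.
  by rewrite -(nth_uniq x0 _ _ U) //=.
move: n03 n14 n24 n34 => /negbTE n03 /negbTE n14 /negbTE n24 /negbTE n34.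
have e10 := e01; rewrite esym in e10.
have e20 := e02; rewrite esym in e20.
have e21 := e12; rewrite esym in e21.
have e31 := e13; rewrite esym in e31.
have e32 := e23; rewrite esym in e32.
have e40 := e04; rewrite esym in e40.
have n30 := n03; rewrite esym in n30.
have n41 := n14; rewrite esym in n41.
have n42 := n24; rewrite esym in n42.
have n43 := n34; rewrite esym in n43.
move=> [i Hi] [j Hj] ne; rewrite /kite_rel /kite_edge /=.
move: ne; rewrite -val_eqE /=.
case: i Hi => [|[|[|[|[|i]]]]] Hi //; case: j Hj => [|[|[|[|[|j]]]]] Hj //= ne;
by rewrite /= ?e01 ?e02 ?e12 ?e13 ?e23 ?e04 ?e10 ?e20 ?e21 ?e31 ?e32 ?e40
  ?n03 ?n14 ?n24 ?n34 ?n30 ?n41 ?n42 ?n43.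
Qed.

Lemma ind_sym (T : finType) (e : rel T) (B : {set T}) :
  symmetric e -> symmetric (induced_rel e B).
Proof. by move=> es x y; rewrite /induced_rel es; case: (x \in B); case: (y \in B). Qed.

Lemma conn_mono (T : finType) (e : rel T) (B B' : {set T}) x y :
  B \subset B' -> connect (induced_rel e B) x y -> connect (induced_rel e B') x y.
Proof.
move=> sub; apply: connect_sub => a b /and3P [aB bB eab]; apply: connect1.
by rewrite /induced_rel (subsetP sub _ aB) (subsetP sub _ bB) eab.
Qed.

Lemma exit (T : finType) (e : rel T) (B B' : {set T}) u v :
  connect (induced_rel e B') u v -> u \in B -> v \notin B ->
  exists z w, [/\ z \in B, w \in B', w \notin B, connect (induced_rel e B) u z & e z w].
Proof.
move/connectP=> [p pth ->]; elim: p u pth => [|y p IH] u /=.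
  by move=> _ ->.
case/andP=> /and3P [uB' yB' euy] pth uB vn.
case yB: (y \in B).
  have [z [w [zB wB' wn c ezw]]] := IH y pth yB vn.
  exists z, w; split=> //; apply: connect_trans c; apply: connect1.
  by rewrite /induced_rel uB yB euy.
by exists u, y; rewrite yB; split.
Qed.

Lemma lift_conn (T : finType) (e : rel T) (B C : {set T}) z1 z2 :
  (forall z y, z \in C -> y \in B -> e z y -> y \in C) -> z1 \in C ->
  connect (induced_rel e B) z1 z2 -> connect (induced_rel e C) z1 z2.
Proof.
move=> cl z1C /connectP [p pth ->]; elim: p z1 z1C pth => [|y p IH] z1 z1C /=.
  by move=> _; exact: connect0.
case/andP=> /and3P [_ yB ezy] pth.
have yC := cl _ _ z1C yB ezy.
apply: connect_trans (IH y yC pth); apply: connect1; by rewrite /induced_rel z1C yC ezy.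
Qed.

Definition gcomp (T : finType) (e : rel T) (B : {set T}) r :=
  [set z in B | connect (induced_rel e B) r z].

Lemma comp_closed (T : finType) (e : rel T) (B : {set T}) r z y :
  z \in gcomp e B r -> y \in B -> e z y -> y \in gcomp e B r.
Proof.
rewrite !inE => /andP [zB c] yB ezy; rewrite yB /=.
apply: connect_trans c _; apply: connect1; by rewrite /induced_rel zB yB ezy.
Qed.

Lemma comp_sub (T : finType) (e : rel T) (B : {set T}) r : gcomp e B r \subset B.
Proof. by apply/subsetP => z; rewrite inE => /andP []. Qed.

Lemma comp_conn (T : finType) (e : rel T) (B : {set T}) r z1 z2 : symmetric e ->
  z1 \in gcomp e B r -> z2 \in gcomp e B r -> connect (induced_rel e (gcomp e B r)) z1 z2.
Proof.
move=> es z1C z2C; apply: (lift_conn (B := B)) => //.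
  by move=> z y zC yB ezy; apply: comp_closed zC yB ezy.
move: z1C z2C; rewrite !inE => /andP [_ c1] /andP [_ c2].
apply: connect_trans c2; by rewrite (sym_connect_sym (ind_sym B es)).
Qed.

Definition goodp (T : finType) (e : rel T) (C P Q : {set T}) (g : nat -> T) k :=
  [/\ g 0 \in P, g k \in Q, (forall i, i <= k -> g i \in C) &
      (forall i, i < k -> e (g i) (g i.+1))].

Lemma goodp_min (T : finType) (e : rel T) (C P Q : {set T}) g k :
  goodp e C P Q g k -> exists g' k', goodp e C P Q g' k' /\
    (forall g'' k'', goodp e C P Q g'' k'' -> k' <= k'').
Proof.
elim: k {-2}k (leqnn k) g => [|n IH] k kn g gd.
  exists g, k; split => // g'' k'' _; lia.
case: (classic (exists g'' k'', goodp e C P Q g'' k'' /\ k'' < k)).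
  move=> [g'' [k'' [gd'' lt]]]; apply: (IH k'' _ g'' gd''); lia.
move=> nex; exists g, k; split => // g'' k'' gd''; case: (leqP k k'') => // lt.
by exfalso; apply: nex; exists g'', k''.
Qed.

Lemma shortest (T : finType) (e : rel T) (C P Q : {set T}) x y :
  x \in P -> y \in Q -> x \in C -> connect (induced_rel e C) x y ->
  exists g k, [/\ g 0 \in P, g k \in Q, (forall i, i <= k -> g i \in C), ipath e g k &
     ((forall i, 0 < i -> i <= k -> g i \notin P) /\ (forall i, i < k -> g i \notin Q))].
Proof.
move=> xP yQ xC /connectP [p pth yl].
have gd : goodp e C P Q (fun i => nth x (x :: p) i) (size p).
  split => //=.
  - by rewrite -last_nth -yl.
  - move=> i ilt; case: i ilt => [|i] ilt //=.
    by move/pathP: pth => /(_ x i ltac:(lia)) /and3P [].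
  - by move=> i ilt; move/pathP: pth => /(_ x i ilt) /and3P [].
have [g [k [[g0 gk gC ge] gmin]]] := goodp_min gd.
exists g, k.
have ge' : forall a b, a < k -> b = a.+1 -> e (g a) (g b).
  by move=> a b ak ->; apply: ge.
have nP : forall i, 0 < i -> i <= k -> g i \notin P.
  move=> i i0 ik; apply/negP => giP.
  have : goodp e C P Q (fun m => g (i + m)) (k - i).
    split => /=; first by rewrite addn0.
    - by rewrite subnKC.
    - move=> m mk; apply: gC; lia.
    - move=> m mk; rewrite addnS; apply: ge; lia.
  move/gmin; lia.
have nQ : forall i, i < k -> g i \notin Q.
  move=> i ik; apply/negP => giQ.
  have : goodp e C P Q g i.
    by split => // m mi; [apply: gC | apply: ge]; lia.
  move/gmin; lia.
have nodup : forall i j, i < j -> j <= k -> g i <> g j.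
  move=> i j ij jk gij.
  pose g' := fun m => if m <= i then g m else g (m + (j - i)).
  have : goodp e C P Q g' (k - (j - i)).
    rewrite /g'; split.
    - by rewrite leq0n.
    - case: ifP => h.
        have -> : k - (j - i) = i by lia.
        by rewrite gij (_ : j = k) //; lia.
      by rewrite subnK //; lia.
    - by move=> m mk; case: ifP => h; apply: gC; lia.
    - move=> m mk; case: ifP => h1; case: ifP => h2.
      + apply: ge'; lia.
      + have mi : m = i by lia.
        by subst m; rewrite gij; apply: ge'; lia.
      + lia.
      + apply: ge'; lia.
  move/gmin; lia.
have nochord : forall i j, i.+1 < j -> j <= k -> ~~ e (g i) (g j).
  move=> i j ij jk; apply/negP => eij.
  pose g' := fun m => if m <= i then g m else g (m + (j - i - 1)).
  have : goodp e C P Q g' (k - (j - i - 1)).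
    rewrite /g'; split.
    - by rewrite leq0n.
    - case: ifP => h; first lia.
      by rewrite subnK //; lia.
    - by move=> m mk; case: ifP => h; apply: gC; lia.
    - move=> m mk; case: ifP => h1; case: ifP => h2.
      + apply: ge'; lia.
      + have mi : m = i by lia.
        by subst m; rewrite (_ : i.+1 + (j - i - 1) = j) //; lia.
      + lia.
      + apply: ge'; lia.
  move/gmin; lia.
split => //; split.
  move=> i j ik jk gij; case: (ltngtP i j) => // ij.
    by case: (nodup i j).
  by case: (nodup j i).
move=> i j ij jk; case: eqP => [->|ne]; first by apply: ge; lia.
by apply/negbTE/nochord => //; lia.
Qed.

Lemma ipath_cat (T : finType) (e : rel T) g1 k1 g2 k2 : ipath e g1 k1 -> ipath e g2 k2 ->
  e (g1 k1) (g2 0) -> (forall i j, i <= k1 -> j <= k2 -> g1 i <> g2 j) ->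
  (forall i j, i <= k1 -> j <= k2 -> e (g1 i) (g2 j) -> i = k1 /\ j = 0) ->
  ipath e (fun m => if m <= k1 then g1 m else g2 (m - k1.+1)) (k1 + k2).+1.
Proof.
move=> [i1 a1] [i2 a2] ejoin ne cross; split.
  move=> i j ik jk; case: ifP => h1; case: ifP => h2.
  - by apply: i1.
  - move=> E; case: (ne i (j - k1.+1)) => //; lia.
  - move=> E; case: (ne j (i - k1.+1)) => //; lia.
  - move/i2 => H; have := H ltac:(lia) ltac:(lia); lia.
move=> i j ij jk; case: ifP => h1; case: ifP => h2.
- by apply: a1.
- case: eqP => E.
    have -> : i = k1 by lia.
    by rewrite (_ : j - k1.+1 = 0) //; lia.
  apply/negbTE/negP => E'; have [] := cross _ _ h1 _ E'; lia.
- lia.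
- by rewrite a2; try lia.
Qed.

Lemma ipath_const (T : finType) (e : rel T) b : ipath e (fun _ => b) 0.
Proof. by split => i j; lia. Qed.

Lemma hole' (T : finType) (e : rel T) : symmetric e -> chordal e ->
  forall g k v, ipath e g k -> 2 <= k ->
  (forall i, i <= k -> v != g i) -> e v (g 0) -> e v (g k) ->
  (forall i, 0 < i -> i < k -> ~~ e v (g i)) -> False.
Proof.
move=> es ch g k v ip k2 vne e0 ek emid; apply: (hole es ch ip k2 vne) => i ik.
case: eqP => [->|i0] //=; case: eqP => [->|ik'] //=.
by apply/negbTE/emid; lia.
Qed.

Definition connb (T : finType) (e : rel T) (B : {set T}) :=
  (B != set0) && [forall x in B, forall y in B, connect (induced_rel e B) x y].

Lemma connbP (T : finType) (e : rel T) (B : {set T}) : reflect (connected_in e B) (connb e B).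
Proof.
apply: (iffP andP) => [[ne /forall_inP H]|[ne H]]; split => //.
  by move=> x y xB yB; move/forall_inP: (H x xB) => /(_ y yB).
by apply/forall_inP => x xB; apply/forall_inP => y yB; apply: H.
Qed.

Lemma disc_other (T : finType) (e : rel T) (B : {set T}) r : symmetric e ->
  ~~ connb e B -> r \in B -> exists2 u, u \in B & ~~ connect (induced_rel e B) r u.
Proof.
move=> es nc rB; case: (classic (exists2 u, u \in B & ~~ connect (induced_rel e B) r u)) => // H.
exfalso; move/negP: nc; apply; apply/andP; split.
  by apply/set0Pn; exists r.
have H' : forall u, u \in B -> connect (induced_rel e B) r u.
  move=> u uB; apply/negPn/negP => nc; apply: H; by exists u.
apply/forall_inP => x xB; apply/forall_inP => y yB.
apply: connect_trans (H' y yB); rewrite (sym_connect_sym (ind_sym B es)); exact: H' x xB.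
Qed.

Definition cutb (T : finType) (e : rel T) (A X : {set T}) :=
  (X \subset A) && ~~ connb e (A :\: X).

Definition minc (T : finType) (e : rel T) (A X : {set T}) :=
  cutb e A X && [forall Y : {set T}, (Y \proper X) ==> ~~ cutb e A Y].

Lemma full (T : finType) (e : rel T) (A X : {set T}) x u :
  minc e A X -> x \in X -> u \in A :\: X ->
  exists2 z, z \in gcomp e (A :\: X) u & e z x.
Proof.
case/andP=> /andP [XA _] /forallP mn xX uB.
have := mn (X :\ x); rewrite properD1 // /= /cutb negb_and negbK.
rewrite (subset_trans (subD1set X x) XA) /= => /andP [_ /forall_inP H].
have xA : x \in A by apply: (subsetP XA).
have uB' : u \in A :\: (X :\ x) by move: uB; rewrite !inE => /andP [/negbTE -> ->]; rewrite andbF.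
have xB' : x \in A :\: (X :\ x) by rewrite !inE eqxx xA.
move/forall_inP: (H u uB') => /(_ x xB') c.
have xnB : x \notin A :\: X by rewrite !inE xX.
have [z [w [zB wB' wn cz ezw]]] := exit c uB xnB.
have wx : w = x.
  move: wB' wn; rewrite !inE; case: (w \in A); rewrite ?andbF ?andbT //=.
  by case: eqP => // _; case: (w \in X).
subst w; exists z => //; by rewrite inE zB cz.
Qed.


Ltac keep_prop P :=
  lazymatch P with
  | is_true (leq _ _) => idtac
  | is_true (~~ leq _ _) => idtac
  | is_true (@eq_op _ _ _) => idtac
  | is_true (~~ @eq_op _ _ _) => idtac
  | @eq bool (leq _ _) _ => idtac
  | @eq bool (@eq_op _ _ _) _ => idtac
  | @eq nat _ _ => idtac
  | ~ @eq nat _ _ => idtac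
  end.
Ltac nlia :=
  repeat match goal with
  | H : ?P |- _ =>
      lazymatch type of P with
      | Prop => tryif keep_prop P then fail else clear H
      end
  end; lia.

Lemma common_nbr (T : finType) (e : rel T) : symmetric e -> irreflexive e -> chordal e ->
  forall (C : {set T}) a b z1 z2, e a b -> a \notin C -> b \notin C ->
  (forall x y, x \in C -> y \in C -> connect (induced_rel e C) x y) ->
  z1 \in C -> z2 \in C -> e z1 a -> e z2 b ->
  exists2 q, q \in C & e q a && e q b.
Proof.
move=> es ei ch C a b z1 z2 eab aC bC Cc z1C z2C ea eb.
have z1P : z1 \in [set z in C | e z a] by rewrite inE z1C ea.
have z2Q : z2 \in [set z in C | e z b] by rewrite inE z2C eb.
have [g [k [g0 gk gC ip [nP nQ]]]] := shortest z1P z2Q z1C (Cc _ _ z1C z2C).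
case: (posnP k) => [k0|kpos].
  subst k; move: g0 gk; rewrite !inE => /andP [_ ea'] /andP [_ eb'].
  by exists (g 0); [exact: gC | rewrite ea' eb'].
exfalso.
have gna : forall i, i <= k -> a != g i.
  by move=> i ik; apply/eqP => E; move: (gC i ik); rewrite -E (negbTE aC).
have gnb : forall i j, i <= k -> j <= 0 -> g i <> b.
  by move=> i j ik _ E; move: (gC i ik); rewrite E (negbTE bC).
have ekb : e (g k) b by move: gk; rewrite inE => /andP [].
have cr : forall i j, i <= k -> j <= 0 -> e (g i) b -> i = k /\ j = 0.
  move=> i j ik j0 E; split; last nlia.
  case: (ltngtP i k) => // ik'; last nlia.
  by have := nQ i ik'; rewrite inE gC // E.
have H := ipath_cat ip (ipath_const e b) ekb gnb cr.
apply: (@hole' _ _ es ch _ _ a H) => /=.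
- nlia.
- move=> i ik; case: ifP => h; first by apply: gna.
  by apply/eqP => E; move: eab; rewrite E ei.
- by rewrite ?leq0n es; move: g0; rewrite inE => /andP [].
- by rewrite addn0 ltnn.
- move=> i i0 ik; rewrite (_ : i <= k); last nlia.
  have := nP i i0 ltac:(nlia); rewrite inE gC /=; last nlia.
  by rewrite es.
Qed.

Lemma comp_disj (T : finType) (e : rel T) (B : {set T}) (r u z : T) : symmetric e ->
  ~~ connect (induced_rel e B) r u -> z \in gcomp e B r -> z \notin gcomp e B u.
Proof.
move=> es nru; rewrite !inE => /andP [_ c1]; apply/negP => /andP [_ c2].
move/negP: nru; apply; apply: connect_trans c1 _.
by rewrite (sym_connect_sym (ind_sym B es)).
Qed.

Lemma clique (T : finType) (e : rel T) : symmetric e -> irreflexive e -> chordal e ->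
  forall A X a b r, minc e A X -> a \in X -> b \in X -> a != b -> r \in A :\: X -> e a b.
Proof.
move=> es ei ch A X a b r mX aX bX ab rB.
apply/negPn/negP => nab.
have [XA ncB] : X \subset A /\ ~~ connb e (A :\: X) by case/andP: mX => /andP [].
have [u uB nru] := disc_other es ncB rB.
have disj : forall z, z \in gcomp e (A :\: X) r -> z \in gcomp e (A :\: X) u -> False.
  by move=> z z1 z2; move: (comp_disj es nru z1); rewrite z2.
have notC : forall x s, x \in X -> x \notin gcomp e (A :\: X) s.
  by move=> x s xX; apply/negP => /(subsetP (comp_sub e (A :\: X) s)); rewrite inE xX.
have [za1 za1C eza1] := full mX aX rB.
have [zb1 zb1C ezb1] := full mX bX rB.
have [za2 za2C eza2] := full mX aX uB.
have [zb2 zb2C ezb2] := full mX bX uB.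
have P1 : za1 \in [set z in gcomp e (A :\: X) r | e z a] by rewrite inE za1C eza1.
have Q1 : zb1 \in [set z in gcomp e (A :\: X) r | e z b] by rewrite inE zb1C ezb1.
have P2 : zb2 \in [set z in gcomp e (A :\: X) u | e z b] by rewrite inE zb2C ezb2.
have Q2 : za2 \in [set z in gcomp e (A :\: X) u | e z a] by rewrite inE za2C eza2.
have [g1 [k1 [g10 g1k g1C ip1 [nP1 nQ1]]]] := shortest P1 Q1 za1C (comp_conn es za1C zb1C).
have [g2 [k2 [g20 g2k g2C ip2 [nP2 nQ2]]]] := shortest P2 Q2 zb2C (comp_conn es zb2C za2C).
move: g10 g1k g20 g2k; rewrite !inE => /andP [_ e1a] /andP [_ e1b] /andP [_ e2b] /andP [_ e2a].
have bnC2 := notC b u bX; have bnC1 := notC b r bX.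
have anC2 := notC a u aX; have anC1 := notC a r aX.
have eb20 : e b (g2 0) by rewrite es.
have ne2 : forall i j, i <= 0 -> j <= k2 -> b <> g2 j.
  by move=> i j _ jk E; move: (g2C j jk); rewrite -E (negbTE bnC2).
have cr2 : forall i j, i <= 0 -> j <= k2 -> e b (g2 j) -> i = 0 /\ j = 0.
  move=> i j i0 jk E; split; first nlia.
  case: (posnP j) => // j0; have := nP2 j j0 jk; by rewrite inE g2C // es E.
have inner := ipath_cat (ipath_const e b) ip2 eb20 ne2 cr2.
have ne1 : forall i j, i <= k1 -> j <= (0 + k2).+1 ->
    g1 i <> (fun m => if m <= 0 then b else g2 (m - 1)) j.
  move=> i j ik jk /=; case: ifP => _ E.
    by move: (g1C i ik); rewrite E (negbTE bnC1).
  apply: (disj (g1 i)); [exact: g1C | rewrite E; apply: g2C; nlia].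
have cr1 : forall i j, i <= k1 -> j <= (0 + k2).+1 ->
    e (g1 i) ((fun m => if m <= 0 then b else g2 (m - 1)) j) -> i = k1 /\ j = 0.
  move=> i j ik jk /=; case: ifP => j0 E.
    split; last nlia.
    case: (ltngtP i k1) => // ik'; last nlia.
    by have := nQ1 i ik'; rewrite inE g1C // E.
  exfalso; apply: (disj (g2 (j - 1))); last (apply: g2C; nlia).
  by apply: comp_closed E; [exact: g1C | apply: (subsetP (comp_sub e _ u)); apply: g2C; nlia].
have H := ipath_cat ip1 inner e1b ne1 cr1.
apply: (@hole' _ _ es ch _ _ a H) => /=.
- nlia.
- move=> i ik; case: ifP => h1.
    by apply/eqP => E; move: (g1C i h1); rewrite -E (negbTE anC1).
  case: ifP => h2; first by apply/eqP => E; rewrite E eqxx in ab.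
  by apply/eqP => E; move: (g2C (i - k1.+1 - 1) ltac:(nlia)); rewrite -E (negbTE anC2).
- by rewrite ?leq0n es.
- rewrite (_ : (k1 + (0 + k2).+1).+1 <= k1 = false); last nlia.
  rewrite (_ : (k1 + (0 + k2).+1).+1 - k1.+1 <= 0 = false); last nlia.
  rewrite (_ : (k1 + (0 + k2).+1).+1 - k1.+1 - 1 = k2); last nlia.
  by rewrite es.
- move=> i i0 ik; case: ifP => h1.
    by have := nP1 i i0 h1; rewrite inE g1C //= es.
  case: ifP => h2; first done.
  have := nQ2 (i - k1.+1 - 1) ltac:(nlia); rewrite inE g2C /=; last nlia.
  by rewrite es.
Qed.

Lemma c4 (T : finType) (e : rel T) : symmetric e -> chordal e ->
  forall (C : {set T}) a b x y, a \notin C -> b \notin C -> a != b -> e a b ->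
  x \in C -> y \in C -> x != y -> e x y -> e x a -> ~~ e x b -> e y b -> ~~ e y a -> False.
Proof.
move=> es ch C a b x y aC bC ab eab xC yC xy exy exa nxb eyb nya.
pose g := fun m : nat => if m == 0 then x else if m == 1 then y else b.
have xb : x != b by apply/eqP => E; move: xC; rewrite E (negbTE bC).
have yb : y != b by apply/eqP => E; move: yC; rewrite E (negbTE bC).
have ip : ipath e g 2.
  split.
    move=> i j ik jk; rewrite /g.
    case: i ik => [|[|[|i]]] ik //; case: j jk => [|[|[|j]]] jk //= E;
    by move: xy xb yb; rewrite E eqxx.
  move=> i j ij jk; rewrite /g.
  case: i ij => [|[|[|i]]] ij //; case: j ij jk => [|[|[|j]]] ij jk //=.
  by rewrite (negbTE nxb).
apply: (@hole' _ _ es ch _ _ a ip) => //.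
- move=> i ik; rewrite /g; case: ifP => _.
    by apply/eqP => E; move: xC; rewrite -E (negbTE aC).
  case: ifP => _ //.
  by apply/eqP => E; move: yC; rewrite -E (negbTE aC).
- by rewrite /g /= es.
- move=> i i0 i2; rewrite /g (_ : i = 1) //=; last nlia.
  by rewrite es.
Qed.

Lemma core_path (T : finType) (e : rel T) : symmetric e -> chordal e -> kite_free e ->
  forall (C : {set T}) a b g k, a \notin C -> b \notin C -> a != b -> e a b ->
  ipath e g k -> 2 <= k -> (forall i, i <= k -> g i \in C) ->
  ~~ e (g 0) a -> ~~ e (g 0) b ->
  (forall i, 0 < i -> i < k -> (e (g i) a || e (g i) b) && ~~ (e (g i) a && e (g i) b)) ->
  e (g k) a -> e (g k) b -> e (g 1) a -> False.
Proof.
move=> es ch kf C a b g k aC bC ab eab [ginj gadj] k2 gC n0a n0b mid eka ekb e1a.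
have gneq : forall i j, i <= k -> j <= k -> i != j -> g i != g j.
  by move=> i j ik jk ij; apply/eqP => /ginj E; move/eqP: ij; apply; apply: E.
have ang : forall i, i <= k -> a != g i.
  by move=> i ik; apply/eqP => E; move: (gC i ik); rewrite -E (negbTE aC).
have bng : forall i, i <= k -> b != g i.
  by move=> i ik; apply/eqP => E; move: (gC i ik); rewrite -E (negbTE bC).
have excl : forall i, 0 < i -> i < k -> e (g i) a -> ~~ e (g i) b.
  by move=> i i0 ik ea; move: (mid i i0 ik); rewrite ea /=.
have ga : forall i, 0 < i -> i < k -> e (g i) a || e (g i) b.
  by move=> i i0 ik; case/andP: (mid i i0 ik).
have n1b := excl 1 isT ltac:(nlia) e1a.
have e01 : e (g 1) (g 0) by rewrite es gadj //; nlia.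
have e12 : e (g 1) (g 2) by rewrite gadj //; nlia.
have n02 : ~~ e (g 2) (g 0) by rewrite es gadj //; nlia.
case: (ltngtP k 2) => [|k3|k2']; first nlia.
-
  have e2a : e (g 2) a.
    case/orP: (ga 2 isT k3) => // e2b.
    case/negP: n1b; apply/negPn/negP => n1b'.
    apply: (c4 es ch aC bC ab eab (gC 1 ltac:(nlia)) (gC 2 ltac:(nlia)) _ e12 e1a n1b' e2b) => //.
      by apply: gneq; nlia.
    apply/negP => e2a; move: (excl 2 isT k3 e2a); by rewrite e2b.
  have n2b := excl 2 isT k3 e2a.
  have e3a : e (g 3) a.
    case: (ltngtP k 3) => [|k4|k3']; first nlia; last by rewrite -k3'.
    case/orP: (ga 3 isT k4) => // e3b.
    exfalso; apply: (c4 es ch aC bC ab eab (gC 2 ltac:(nlia)) (gC 3 ltac:(nlia)) _ _ e2a n2b e3b).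
    + by apply: gneq; nlia.
    + by rewrite gadj //; nlia.
    + apply/negP => e3a; move: (excl 3 isT k4 e3a); by rewrite e3b.
  apply: (kite_contra es kf (x0 := g 1) (x1 := a) (x2 := g 2) (x3 := g 3) (x4 := g 0)).
  + rewrite /= !inE !negb_or -!andbA.
    rewrite ![a == g _]eq_sym ![_ == a]eq_sym !ang ?gneq //; nlia.
  + done.
  + done.
  + by rewrite es.
  + by rewrite es.
  + by rewrite gadj //; nlia.
  + done.
  + by rewrite gadj //; nlia.
  + by rewrite es.
  + done.
  + by rewrite es gadj //; nlia.
-
  subst k.
  apply: (kite_contra es kf (x0 := g 1) (x1 := a) (x2 := g 2) (x3 := b) (x4 := g 0)).
  + rewrite /= !inE !negb_or -!andbA.
    rewrite ![a == g _]eq_sym ![b == g _]eq_sym ![_ == a]eq_sym ![_ == b]eq_sym.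
    by rewrite !ang ?bng ?gneq // eq_sym ab.
  + done.
  + done.
  + by rewrite es.
  + done.
  + done.
  + done.
  + done.
  + by rewrite es.
  + done.
  + by rewrite es.
Qed.

Lemma dom_lemma (T : finType) (e : rel T) : symmetric e -> irreflexive e -> chordal e -> kite_free e ->
  forall A X a b r, minc e A X -> a \in X -> b \in X -> a != b -> r \in A :\: X ->
  ~~ e r a -> ~~ e r b -> False.
Proof.
move=> es ei ch kf A X a b r mX aX bX ab rB nra nrb.
have eab := clique es ei ch mX aX bX ab rB.
have [XA ncB] : X \subset A /\ ~~ connb e (A :\: X) by case/andP: mX => /andP [].
have [u uB nru] := disc_other es ncB rB.
have notC : forall x s, x \in X -> x \notin gcomp e (A :\: X) s.
  by move=> x s xX; apply/negP => /(subsetP (comp_sub e (A :\: X) s)); rewrite inE xX.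
have [za' za'C eza'] := full mX aX uB.
have [zb' zb'C ezb'] := full mX bX uB.
have [za za'C' eza] := full mX aX rB.
have [zb zb'C' ezb] := full mX bX rB.
have [p pC' /andP [epa epb]] := common_nbr es ei ch eab (notC a u aX) (notC b u bX)
  (fun x y xC yC => comp_conn es xC yC) za'C zb'C eza' ezb'.
have [q qC /andP [eqa eqb]] := common_nbr es ei ch eab (notC a r aX) (notC b r bX)
  (fun x y xC yC => comp_conn es xC yC) za'C' zb'C' eza ezb.
have rC : r \in gcomp e (A :\: X) r by rewrite inE rB connect0.
have pnC : p \notin gcomp e (A :\: X) r.
  by apply/negP => pC; move: (comp_disj es nru pC); rewrite pC'.
have pB : p \in A :\: X by apply: (subsetP (comp_sub e _ u)).
have rP : r \in [set z in gcomp e (A :\: X) r | ~~ e z a && ~~ e z b] by rewrite inE rC nra nrb.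
have qQ : q \in [set z in gcomp e (A :\: X) r | e z a && e z b] by rewrite inE qC eqa eqb.
have [g [k [g0 gk gC ip [nP nQ]]]] := shortest rP qQ rC (comp_conn es rC qC).
move: g0 gk; rewrite !inE => /and3P [_ n0a n0b] /and3P [_ eka ekb].
have k1 : 0 < k.
  by case: (posnP k) => // k0; move: n0a; rewrite -k0 eka.
have aC := notC a r aX; have bC := notC b r bX.
have [ginj gadj] := ip.
case: (ltngtP k 1) => [|k2|k1']; first nlia.
- have mid : forall i, 0 < i -> i < k -> (e (g i) a || e (g i) b) && ~~ (e (g i) a && e (g i) b).
    move=> i i0 ik; have := nP i i0 ltac:(nlia); have := nQ i ik.
    have gi := gC i ltac:(nlia); rewrite !inE in gi *; rewrite gi /=.
    by case: (e (g i) a); case: (e (g i) b).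
  case/andP: (mid 1 isT k2) => /orP [e1a|e1b] _.
    exact: (core_path es ch kf aC bC ab eab ip k2 gC n0a n0b mid eka ekb e1a).
  apply: (core_path es ch kf bC aC _ _ ip k2 gC n0b n0a _ ekb eka e1b).
  + by rewrite eq_sym.
  + by rewrite es.
  + move=> i i0 ik; move: (mid i i0 ik).
    by case: (e (g i) a); case: (e (g i) b).
- subst k.
  have pg : forall i, i <= 1 -> ~~ e (g i) p.
    move=> i i1; apply/negP => E; move/negP: pnC; apply.
    by apply: comp_closed E; [apply: gC | ].
  have g01 : g 0 != g 1 by apply/eqP => /ginj E; have := E isT isT.
  have nc : forall x, x \notin gcomp e (A :\: X) r -> forall i, i <= 1 -> x != g i.
    by move=> x xC i i1; apply/eqP => E; move: (gC i i1); rewrite -E (negbTE xC).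
  apply: (kite_contra es kf (x0 := g 1) (x1 := a) (x2 := b) (x3 := p) (x4 := g 0)).
  + have pa : p != a by apply/eqP => E; move: pB; rewrite E inE aX.
    have pb : p != b by apply/eqP => E; move: pB; rewrite E inE bX.
    have f1 : g 1 != a by rewrite eq_sym nc.
    have f2 : g 1 != b by rewrite eq_sym nc.
    have f3 : g 1 != p by rewrite eq_sym nc.
    have f4 : g 1 != g 0 by rewrite eq_sym.
    have f5 : a != p by rewrite eq_sym.
    have f6 : a != g 0 by rewrite nc.
    have f7 : b != p by rewrite eq_sym.
    have f8 : b != g 0 by rewrite nc.
    have f9 : p != g 0 by rewrite nc.
    by rewrite /= !inE !negb_or f1 f2 f3 f4 ab f5 f6 f7 f8 f9.
  + done.
  + done.
  + done.
  + by rewrite es.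
  + by rewrite es.
  + by rewrite es gadj //; nlia.
  + by apply: pg.
  + by rewrite es.
  + by rewrite es.
  + by rewrite es; apply: pg.
Qed.

Lemma min_below (T : finType) (e : rel T) (A Y : {set T}) :
  cutb e A Y -> exists2 X : {set T}, X \subset Y & minc e A X.
Proof.
have [n] := ubnP #|Y|; elim: n Y => // n IH Y cardY cY.
case: (boolP (minc e A Y)) => [mY|nmY]; first by exists Y.
move: nmY; rewrite /minc cY /= negb_forall => /existsP [Z].
rewrite negb_imply negbK => /andP [pZ cZ].
have [X XZ mX] := IH Z (leq_trans (proper_card pZ) cardY) cZ.
exists X => //; apply: subset_trans XZ (proper_sub pZ).
Qed.

Lemma sperner (T : finType) (e : rel T) : symmetric e -> irreflexive e -> chordal e -> kite_free e ->
  forall A X Y, minc e A X -> minc e A Y -> #|X :\: Y| <= 1.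
Proof.
move=> es ei ch kf A X Y mX mY; rewrite leqNgt; apply/negP => /card_gt1P [a [b [aXY bXY ab]]].
move: (aXY) (bXY); rewrite !inE => /andP [aY aX] /andP [bY bX].
have [XA _] : X \subset A /\ true by case/andP: mX => /andP [].
have [YA ncB'] : Y \subset A /\ ~~ connb e (A :\: Y) by case/andP: mY => /andP [].
case: (boolP (Y \subset X)) => [YX|].
  case: (eqVneq Y X) => [YeX|YnX].
    by move: aXY; rewrite YeX setDv inE.
  case/andP: mX => _ /forallP /(_ Y); rewrite properEneq YnX YX /=.
  by case/andP: mY => ->.
case/subsetPn => c cY cX.
have cA : c \in A by apply: (subsetP YA).
have cB : c \in A :\: X by rewrite inE cX cA.
have eab := clique es ei ch mX aX bX ab cB.
have aA : a \in A by apply: (subsetP XA).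
have bA : b \in A by apply: (subsetP XA).
have aB' : a \in A :\: Y by rewrite inE aY aA.
have bB' : b \in A :\: Y by rewrite inE bY bA.
have [u' u'B nau'] := disc_other es ncB' aB'.
have [r rC erc] := full mY cY u'B.
have rB' : r \in A :\: Y by apply: (subsetP (comp_sub e _ u')).
have csym := sym_connect_sym (ind_sym (A :\: Y) es).
have nar : ~~ connect (induced_rel e (A :\: Y)) a r.
  apply/negP => c1; move/negP: nau'; apply; apply: connect_trans c1 _.
  move: rC; rewrite inE => /andP [_ c2]; by rewrite csym.
have nra : ~~ e r a.
  apply/negP => E; move/negP: nar; apply; apply: connect1.
  by rewrite /induced_rel aB' rB' es.
have nrb : ~~ e r b.
  apply/negP => E; move/negP: nar; apply.
  have h1 : induced_rel e (A :\: Y) a b by rewrite /induced_rel aB' bB' eab.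
  have h2 : induced_rel e (A :\: Y) b r by rewrite /induced_rel bB' rB' es.
  exact: connect_trans (connect1 h1) (connect1 h2).
have rX : r \notin X.
  apply/negP => rX; move/negP: nra; apply; rewrite es.
  apply: (clique es ei ch mX aX rX _ cB).
  by apply/eqP => E; move/negP: nar; apply; rewrite E connect0.
have rA : r \in A by move: rB'; rewrite inE => /andP [].
have rB : r \in A :\: X by rewrite inE rX rA.
exact: (dom_lemma es ei ch kf mX aX bX ab rB nra nrb).
Qed.

Lemma cds_iff (T : finType) (e : rel T) (A S : {set T}) : symmetric e ->
  S \subset A -> (is_cds e A S <-> forall X, minc e A X -> X :&: S != set0).
Proof.
move=> es SA; split.
  move=> [_ [dom [Sne Sc]]] X mX; apply/negP => /eqP XS.
  case/andP: mX => /andP [XA ncX] _; move/negP: ncX; apply; apply/connbP.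
  have SB : S \subset A :\: X.
    apply/subsetP => s sS; rewrite inE (subsetP SA _ sS) andbT.
    apply/negP => sX; have : s \in X :&: S by rewrite inE sX sS.
    by rewrite XS inE.
  have toS : forall x, x \in A :\: X -> exists2 s, s \in S & connect (induced_rel e (A :\: X)) x s.
    move=> x xB; case: (boolP (x \in S)) => xS; first by exists x => //; exact: connect0.
    have [s sS exs] := dom x (subsetP (subsetDl A X) _ xB) xS.
    exists s => //; apply: connect1; by rewrite /induced_rel xB (subsetP SB _ sS) exs.
  split.
    by move: Sne; apply: contraNN => /eqP E; apply/eqP; apply/eqP; rewrite -subset0 -E.
  move=> x y xB yB.
  have [s sS cxs] := toS x xB; have [s' s'S cys'] := toS y yB.
  apply: connect_trans cxs _; apply: connect_trans (conn_mono SB (Sc s s' sS s'S)) _.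
  by rewrite (sym_connect_sym (ind_sym _ es)).
move=> H.
have key : forall Y : {set T}, Y \subset A -> Y :&: S = set0 -> connb e (A :\: Y).
  move=> Y YA YS; apply/negPn/negP => nc.
  have cY : cutb e A Y by rewrite /cutb YA nc.
  have [X XY mX] := min_below cY.
  move: (H X mX); apply/negP/negPn/eqP; apply/eqP; rewrite -subset0 -YS.
  by apply: setSI.
have Sc : connb e S.
  have := key (A :\: S) (subsetDl A S).
  rewrite setDDr setDv set0U (setIidPr SA); apply.
  by apply/eqP; rewrite -subset0; apply/subsetP => z; rewrite !inE => /andP [/andP [/negP ? _] ?].
have [Sne _] := andP Sc.
split => //; split; last by apply/connbP.
move=> x xA xS.
have Y0 : ((A :\: S) :\ x) :&: S = set0.
  by apply/eqP; rewrite -subset0; apply/subsetP => z; rewrite !inE => /andP [/and3P [_ /negP ? _] ?].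
have := key _ (subset_trans (subD1set _ x) (subsetDl A S)) Y0 => /andP [_ /forall_inP C].
have xB : x \in A :\: ((A :\: S) :\ x) by rewrite !inE eqxx xA.
case/set0Pn: Sne => s sS.
have sB : s \in A :\: ((A :\: S) :\ x) by rewrite !inE sS (subsetP SA _ sS) andbF.
move/forall_inP: (C x xB) => /(_ s sB) cxs.
have xin : x \in [set x] by rewrite inE.
have sn : s \notin [set x] by rewrite inE; apply/eqP => E; move: xS; rewrite -E sS.
have [z [w [zx wB wn _ ezw]]] := exit cxs xin sn.
move: zx; rewrite inE => /eqP zx; subst z.
exists w => //.
move: wB wn; rewrite !inE; case: (w \in S) => //=.
by case/andP => /negP H1 wA wx; case: H1; rewrite wx wA.
Qed.

Lemma count_sum (T : finType) (M : {set {set T}}) (S : {set T}) :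
  \sum_(x in S) #|[set X in M | x \in X]| = \sum_(X in M) #|X :&: S|.
Proof.
transitivity (\sum_(x in S) \sum_(X in M) (x \in X : nat)).
  apply: eq_bigr => x _; rewrite -sum1_card big_mkcond [RHS]big_mkcond /=.
  by apply: eq_bigr => X _; rewrite inE; case: (X \in M); case: (x \in X).
rewrite exchange_big /=; apply: eq_bigr => X _.
rewrite -sum1_card big_mkcond [RHS]big_mkcond /=.
by apply: eq_bigr => x _; rewrite inE; case: (x \in X); case: (x \in S).
Qed.

Unset Implicit Arguments.

Theorem mainTheorem9 (T : finType) (e : rel T) :
  simple_graph e -> kite_free e -> chordal e ->
  hereditarily_connected_domishold e.
Proof.
move=> [es ei] kf ch A; right.
pose M := [set X : {set T} | minc e A X].
pose wn := fun x => #|[set X in M | x \in X]|.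
exists (fun x => INR (wn x)), (INR #|M|); split; [|split].
- by move=> x _; apply: pos_INR.
- by apply: pos_INR.
move=> S SA.
have sumE : \big[Rplus/0%R]_(x in S) INR (wn x) = INR (\sum_(x in S) wn x).
  by rewrite (big_morph INR (id1 := 0%R) (op1 := Rplus) (fun a b => plus_INR a b) (erefl : INR 0 = 0%R)).
rewrite sumE /wn count_sum.
have sp : forall X Y, X \in M -> Y \in M -> #|X :\: Y| <= 1.
  by move=> X Y; rewrite !inE; apply: sperner.
split.
- move=> /INR_le /leP hle; apply/(cds_iff es SA) => X mX; apply/negP => /eqP XS.
  have XM : X \in M by rewrite inE.
  have : \sum_(Y in M) #|Y :&: S| < #|M|.
    rewrite -[#|M|]sum1_card (bigD1 X XM) /= XS cards0 (bigD1 X XM) /= add0n add1n ltnS.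
    apply: leq_sum => Y /andP [YM YX].
    apply: leq_trans (sp Y X YM XM); apply: subset_leq_card.
    apply/subsetP => z; rewrite !inE => /andP [zY zS]; rewrite zY andbT.
    apply/negP => zX; have : z \in X :&: S by rewrite inE zX zS.
    by rewrite XS inE.
  by rewrite ltnNge hle.
- move=> cds; apply/le_INR/leP; have H := proj1 (cds_iff es SA) cds.
  rewrite -[#|M|]sum1_card; apply: leq_sum => X XM; rewrite card_gt0; apply: H.
  by rewrite inE in XM.
Qed.
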